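(* Let $V$ be an $n$-dimensional real vector space. (i) If $L\subset V\oplus V^*$ is a forward LD structure, there is a symmetric bilinear form $\Psi$ on $V$ such that the symmetric bilinear form $\langle\!\langle (v_1,\eta_1),(v_2,\eta_2)\rangle\!\rangle=\langle\eta_1|v_2\rangle+\langle\eta_2|v_1\rangle-2\Psi(v_1,v_2)$ on $V\oplus V^*$ is nondegenerate of signature $(n,n)$ and $L$ is maximally isotropic for it. (ii) If $L$ is a backward LD structure, there is a symmetric bilinear form $\Phi$ on $V^*$ such that $\langle\!\langle (v_1,\eta_1),(v_2,\eta_2)\rangle\!\rangle=\langle\eta_1|v_2\rangle+\langle\eta_2|v_1\rangle-2\Phi(\eta_1,\eta_2)$ is nondegenerate of signature $(n,n)$ and $L$ is maximally isotropic for it.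
   Context: $\rho,\rho^*$ are the projections of $V\oplus V^*$ onto $V,V^*$; $\langle\eta|v\rangle$ the natural pairing; $W^\circ$ the annihilator; $L\cap V=\{v:(v,0)\in L\}$, $L\cap V^*=\{\eta:(0,\eta)\in L\}$. A forward Leibniz–Dirac (LD) structure is a subspace $L\subset V\oplus V^*$ with $\rho(L)^{\circ}=L\cap V^*$; a backward LD structure is one with $\rho^*(L)^{\circ}=L\cap V$. *)

(* Defs.v *)
(* V = 'rV[R]_n, dual space Vd = 'rV[R]_n with the pairing
   <eta|v> = eta . v, V (+) Vd = 'rV[R]_(n + n) (first n coords: V, last n: Vd).
   Subspaces are row spaces of square matrices (mxalgebra). *)
From HB Require Import structures.
From mathcomp Require Import all_boot all_order all_algebra.
Set Implicit Arguments. Unset Strict Implicit. Unset Printing Implicit Defensive.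
Import Order.TTheory GRing.Theory Num.Theory.
Local Open Scope ring_scope.

Section LD.
Variables (R : realFieldType) (n : nat).

Definition pairing (eta v : 'rV[R]_n) : R := (eta *m v^T) 0 0.

Definition rho (x : 'rV[R]_(n + n)) : 'rV[R]_n := lsubmx x.
Definition rhos (x : 'rV[R]_(n + n)) : 'rV[R]_n := rsubmx x.

Definition in_rho (L : 'M[R]_(n + n)) (v : 'rV[R]_n) : Prop :=
  exists x : 'rV[R]_(n + n), (x <= L)%MS /\ rho x = v.
Definition in_rhos (L : 'M[R]_(n + n)) (eta : 'rV[R]_n) : Prop :=
  exists x : 'rV[R]_(n + n), (x <= L)%MS /\ rhos x = eta.

Definition forward_LD (L : 'M[R]_(n + n)) : Prop :=
  forall eta : 'rV[R]_n,
    (forall v, in_rho L v -> pairing eta v = 0) <-> (row_mx 0 eta <= L)%MS.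

Definition backward_LD (L : 'M[R]_(n + n)) : Prop :=
  forall v : 'rV[R]_n,
    (forall eta, in_rhos L eta -> pairing eta v = 0) <-> (row_mx v 0 <= L)%MS.

Definition bform (M : 'M[R]_n) (a b : 'rV[R]_n) : R := (a *m M *m b^T) 0 0.

Definition form_fwd (P : 'M[R]_n) (x y : 'rV[R]_(n + n)) : R :=
  pairing (rhos x) (rho y) + pairing (rhos y) (rho x) - 2 * bform P (rho x) (rho y).

Definition form_bwd (P : 'M[R]_n) (x y : 'rV[R]_(n + n)) : R :=
  pairing (rhos x) (rho y) + pairing (rhos y) (rho x) - 2 * bform P (rhos x) (rhos y).

End LD.

Section Forms.
Variables (R : realFieldType) (m : nat).
Implicit Types (B : 'rV[R]_m -> 'rV[R]_m -> R) (U L : 'M[R]_m).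

Definition nondeg_form B : Prop :=
  forall x, (forall y, B x y = 0) -> x = 0.

Definition pos_def_on B U : Prop :=
  forall x, (x <= U)%MS -> x != 0 -> 0 < B x x.
Definition neg_def_on B U : Prop :=
  forall x, (x <= U)%MS -> x != 0 -> B x x < 0.

Definition has_signature B (p q : nat) : Prop :=
  ((exists U, \rank U = p /\ pos_def_on B U) /\
   (forall U, pos_def_on B U -> (\rank U <= p)%N)) /\
  ((exists U, \rank U = q /\ neg_def_on B U) /\
   (forall U, neg_def_on B U -> (\rank U <= q)%N)).

Definition isotropic B L : Prop :=
  forall x y, (x <= L)%MS -> (y <= L)%MS -> B x y = 0.

Definition max_isotropic B L : Prop :=
  isotropic B L /\ forall L', isotropic B L' -> (L <= L')%MS -> (L' <= L)%MS.

End Forms.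

(* Main.v *)
Require Import Defs.
From HB Require Import structures.
From mathcomp Require Import all_boot all_order all_algebra.
From mathcomp Require Import zify ring lra.
Import Order.TTheory GRing.Theory Num.Theory.
Local Open Scope ring_scope.
Set Implicit Arguments. Unset Strict Implicit. Unset Printing Implicit Defensive.

Section Gen.
Variables (R : realFieldType) (m : nat).

Lemma disj_rank k l (A : 'M[R]_(k, m)) (B : 'M[R]_(l, m)) :
  (forall x : 'rV[R]_m, (x <= A)%MS -> (x <= B)%MS -> x = 0) ->
  (\rank A + \rank B <= m)%N.
Proof.
move=> H.
have cap0 : (A :&: B <= (0 : 'M_m))%MS.
  apply/row_subP => i.
  have := row_sub i (A :&: B)%MS; rewrite sub_capmx => /andP [h1 h2].
  by rewrite (H _ h1 h2) sub0mx.
have := mxrank_adds_leqif A B; rewrite cap0 => -[_ /eqP <-].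
exact: rank_leq_col.
Qed.

Lemma pd_rank (F : 'rV[R]_m -> 'rV[R]_m -> R) l (U : 'M[R]_m) (N : 'M[R]_(l, m)) :
  pos_def_on F U -> (forall x, (x <= N)%MS -> F x x = 0) ->
  (\rank U + \rank N <= m)%N.
Proof.
move=> hU hN; apply: disj_rank => x xU xN.
apply/eqP; apply: contraT => nz.
by have := hU x xU nz; rewrite hN // ltxx.
Qed.

Lemma nd_rank (F : 'rV[R]_m -> 'rV[R]_m -> R) l (U : 'M[R]_m) (N : 'M[R]_(l, m)) :
  neg_def_on F U -> (forall x, (x <= N)%MS -> F x x = 0) ->
  (\rank U + \rank N <= m)%N.
Proof.
move=> hU hN; apply: disj_rank => x xU xN.
apply/eqP; apply: contraT => nz.
by have := hU x xU nz; rewrite hN // ltxx.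
Qed.

Variable S : 'M[R]_m.
Hypothesis SS : S *m S = 1%:M.

Lemma SSx k (x : 'M[R]_(k, m)) : x *m S *m S = x.
Proof. by rewrite -mulmxA SS mulmx1. Qed.

Lemma subS k l (x : 'M[R]_(k, m)) (U : 'M[R]_(l, m)) :
  (x <= U *m S)%MS = (x *m S <= U)%MS.
Proof.
apply/idP/idP => h.
  by rewrite -(SSx U); apply: submxMr.
by rewrite -(SSx x); apply: submxMr.
Qed.

Lemma rankS (U : 'M[R]_m) : \rank (U *m S) = \rank U.
Proof.
apply: mxrankMfree; rewrite row_free_unit.
by case: (mulmx1_unit SS).
Qed.

Variables (F G : 'rV[R]_m -> 'rV[R]_m -> R).
Hypothesis FG : forall x y, G x y = F (x *m S) (y *m S).

Lemma GF x y : F x y = G (x *m S) (y *m S).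
Proof. by rewrite FG !SSx. Qed.

Lemma tr_nondeg : nondeg_form F -> nondeg_form G.
Proof.
move=> nF x hx; rewrite -(SSx x); apply/eqP; rewrite (nF (x *m S)) ?mul0mx //.
by move=> y; rewrite -(SSx y) -FG hx.
Qed.

Lemma tr_pd U : pos_def_on F U -> pos_def_on G (U *m S).
Proof.
move=> h x; rewrite subS => xU nz; rewrite FG; apply: h => //.
by apply: contra nz => /eqP e; rewrite -(SSx x) e mul0mx.
Qed.

Lemma tr_nd U : neg_def_on F U -> neg_def_on G (U *m S).
Proof.
move=> h x; rewrite subS => xU nz; rewrite FG; apply: h => //.
by apply: contra nz => /eqP e; rewrite -(SSx x) e mul0mx.
Qed.

Lemma tr_iso L : isotropic F L -> isotropic G (L *m S).
Proof. by move=> h x y; rewrite !subS => hx hy; rewrite FG h. Qed.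

End Gen.

Section Gen2.
Variables (R : realFieldType) (m : nat).
Variable S : 'M[R]_m.
Hypothesis SS : S *m S = 1%:M.
Variables (F G : 'rV[R]_m -> 'rV[R]_m -> R).
Hypothesis FG : forall x y, G x y = F (x *m S) (y *m S).

Lemma tr_sig p q : has_signature F p q -> has_signature G p q.
Proof.
have GF := GF SS FG.
move=> [[[U [rU pU]] hp] [[V [rV nV]] hq]].
split; split.
- by exists (U *m S); rewrite rankS // rU; split=> //; apply: tr_pd.
- by move=> U' /(tr_pd SS GF) /hp; rewrite rankS.
- by exists (V *m S); rewrite rankS // rV; split=> //; apply: tr_nd.
- by move=> U' /(tr_nd SS GF) /hq; rewrite rankS.
Qed.

Lemma tr_maxiso L : max_isotropic F L -> max_isotropic G (L *m S).
Proof.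
have GF := GF SS FG.
move=> [iL mL]; split; first exact: tr_iso.
move=> L' iL' sub.
rewrite subS //; apply: mL; first exact: (tr_iso SS GF).
by rewrite -(SSx SS L); apply: submxMr.
Qed.

End Gen2.

Section Fwd.
Variables (R : realFieldType) (n : nat).
Local Notation V := 'rV[R]_n.
Local Notation VV := 'rV[R]_(n + n).

Lemma pairing_sym (a b : V) : pairing a b = pairing b a.
Proof.
rewrite /pairing !mxE.
by apply: eq_bigr => i _; rewrite !mxE mulrC.
Qed.

Lemma rhoE (a b : V) : rho (row_mx a b) = a.
Proof. by rewrite /rho row_mxKl. Qed.
Lemma rhosE (a b : V) : rhos (row_mx a b) = b.
Proof. by rewrite /rhos row_mxKr. Qed.

Lemma form_fwdE (P : 'M[R]_n) (a b c d : V) :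
  form_fwd P (row_mx a b) (row_mx c d) =
  (b *m c^T) 0 0 + (d *m a^T) 0 0 - 2 * (a *m P *m c^T) 0 0.
Proof. by rewrite /form_fwd !rhoE !rhosE. Qed.

Lemma sq_pos (v : V) : v != 0 -> 0 < (v *m v^T) 0 0.
Proof.
move=> nz; rewrite mxE.
have h : forall i, true -> 0 <= v 0 i * v^T i 0 by move=> i _; rewrite mxE -expr2 sqr_ge0.
rewrite lt_def sumr_ge0 // andbT.
apply: contra nz => /eqP /psumr_eq0P => /(_ h) z.
apply/eqP/rowP => i; rewrite mxE.
by have := z i isT; rewrite mxE -expr2 => /eqP; rewrite sqrf_eq0 => /eqP.
Qed.

Lemma row_eta (x : VV) : x = row_mx (rho x) (rhos x).
Proof. by rewrite hsubmxK. Qed.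

Lemma rank_pos (X : 'M[R]_n) : \rank (row_mx 1%:M X) = n.
Proof.
apply/eqP; rewrite eqn_leq rank_leq_row /=.
have := mxrankM_maxl (row_mx 1%:M X) (col_mx 1%:M 0).
by rewrite mul_row_col mulmx1 mulmx0 addr0 mxrank1.
Qed.

Lemma sub_rowmx (x : VV) (X Y : 'M[R]_n) :
  (x <= col_mx (row_mx X Y) (0 : 'M_(n, n + n)))%MS -> exists w : 'rV[R]_n, x = row_mx (w *m X) (w *m Y).
Proof.
case/submxP => D ->; exists (lsubmx D).
by rewrite -{1}(hsubmxK D) mul_row_col mulmx0 addr0 mul_mx_row.
Qed.

Lemma addE (A B : 'M[R]_1) : (A + B) 0 0 = A 0 0 + B 0 0.
Proof. by rewrite mxE. Qed.
Lemma oppE (A : 'M[R]_1) : (- A) 0 0 = - A 0 0.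
Proof. by rewrite mxE. Qed.

Lemma fwd_sig (P : 'M[R]_n) : has_signature (form_fwd P) n n.
Proof.
have hN : forall x, (x <= col_mx (row_mx (0 : 'M[R]_n) 1%:M) (0 : 'M_(n, n + n)))%MS -> form_fwd P x x = 0.
  move=> x hx; have [w ->] := sub_rowmx hx; rewrite form_fwdE !mulmx0 trmx0 !mulmx0 !mxE.
  by rewrite mulr0 subr0 addr0.
have rN : \rank (col_mx (row_mx (0 : 'M[R]_n) 1%:M) (0 : 'M_(n, n + n))) = n by rewrite rank_col_mx0 rank_row_0mx mxrank1.
split; split.
- exists (col_mx (row_mx 1%:M (P + 1%:M)) 0); split; first by rewrite rank_col_mx0 rank_pos.
  move=> x hx; have [w ->] := sub_rowmx hx; rewrite mulmx1 => nz.
  have wnz : w != 0 by apply: contra nz => /eqP ->; rewrite !mul0mx row_mx0.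
  rewrite form_fwdE mulmxDr mulmx1 mulmxDl !addE.
  have := sq_pos wnz; lra.
- move=> U pU; have := pd_rank pU hN; rewrite rN; lia.
- exists (col_mx (row_mx 1%:M (P - 1%:M)) 0); split; first by rewrite rank_col_mx0 rank_pos.
  move=> x hx; have [w ->] := sub_rowmx hx; rewrite mulmx1 => nz.
  have wnz : w != 0 by apply: contra nz => /eqP ->; rewrite !mul0mx row_mx0.
  rewrite form_fwdE mulmxBr mulmx1 mulmxBl !addE !oppE.
  have := sq_pos wnz; lra.
- move=> U pU; have := nd_rank pU hN; rewrite rN; lia.
Qed.
End Fwd.

Section Fwd2.
Variables (R : realFieldType) (n : nat).
Local Notation V := 'rV[R]_n.
Local Notation VV := 'rV[R]_(n + n).

Lemma zE : (0 : 'M[R]_1) 0 0 = 0.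
Proof. by rewrite mxE. Qed.

Lemma sq0 (v : V) : (v *m v^T) 0 0 = 0 -> v = 0.
Proof.
move=> h; apply/eqP; apply: contraT => nz.
by have := sq_pos nz; rewrite h ltxx.
Qed.

Lemma fwd_nondeg (P : 'M[R]_n) : nondeg_form (form_fwd P).
Proof.
move=> x hx; rewrite (row_eta x) in hx *.
set a := rho x in hx *; set b := rhos x in hx *.
have ha : a = 0.
  apply: sq0; have := hx (row_mx 0 a).
  by rewrite form_fwdE trmx0 !mulmx0 zE mulr0 subr0 add0r.
have := hx (row_mx b 0); rewrite ha form_fwdE !mul0mx zE mulr0 subr0 addr0.
by move/sq0 => ->; rewrite row_mx0.
Qed.

End Fwd2.

Section Fwd3.
Variables (R : realFieldType) (n : nat).
Local Notation V := 'rV[R]_n.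
Local Notation VV := 'rV[R]_(n + n).

Lemma rhoM k (w : 'M[R]_(k, n + n)) (L : 'M[R]_(n + n)) :
  lsubmx (w *m L) = w *m lsubmx L.
Proof. by rewrite -{1}(hsubmxK L) mul_mx_row row_mxKl. Qed.
Lemma rhosM k (w : 'M[R]_(k, n + n)) (L : 'M[R]_(n + n)) :
  rsubmx (w *m L) = w *m rsubmx L.
Proof. by rewrite -{1}(hsubmxK L) mul_mx_row row_mxKr. Qed.

Lemma trE (X : 'M[R]_1) : X^T 0 0 = X 0 0.
Proof. by rewrite mxE. Qed.

Lemma sE (c : R) (X : 'M[R]_1) : (c *: X) 0 0 = c * X 0 0.
Proof. by rewrite mxE. Qed.

Lemma fwd_main (L : 'M[R]_(n + n)) : forward_LD L ->
  exists Psi : 'M[R]_n, Psi^T = Psi /\ isotropic (form_fwd Psi) L /\ (n <= \rank L)%N.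
Proof.
move=> hL.
pose A := lsubmx L; pose B := rsubmx L.
have hA : forall w : VV, w *m A = 0 -> w *m B *m A^T = 0.
  move=> w wA.
  have sub : (row_mx 0 (w *m B) <= L)%MS.
    by rewrite -wA -mul_mx_row hsubmxK submxMl.
  have ann := proj2 (hL (w *m B)) sub.
  apply/rowP => i; rewrite [RHS]mxE.
  have rA : in_rho L (row i A).
    exists (row i L); split; first exact: row_sub.
    by rewrite /rho rowE rhoM -rowE.
  rewrite -(ann _ rA) /pairing !mxE; apply: eq_bigr => j _; rewrite !mxE.
  by [].
have hAM : forall k (W : 'M[R]_(k, n + n)), W *m A = 0 -> W *m B *m A^T = 0.
  move=> k W hW; apply/row_matrixP => i; rewrite row0 !row_mul; apply: hA.
  by rewrite -row_mul hW row0.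
pose G := pinvmx A.
have AGA : A *m G *m A = A by apply: mulmxKpV; exact: submx_refl.
have eqC : B *m A^T = A *m G *m B *m A^T.
  have := hAM _ (A *m G - 1%:M) _.
  rewrite mulmxBl AGA mul1mx subrr => /(_ erefl).
  by rewrite !mulmxBl mul1mx => /eqP; rewrite subr_eq0 => /eqP ->.
have hAT : A^T = A^T *m G^T *m A^T by rewrite -{1}AGA !trmx_mul mulmxA.
pose M := G *m B *m A^T *m G^T.
have CM : B *m A^T = A *m M *m A^T.
  by rewrite eqC {1}hAT /M !mulmxA.
have CMT : A *m B^T = A *m M^T *m A^T.
  have := congr1 trmx CM; rewrite !trmx_mul !trmxK !mulmxA => ->.
  by [].
clearbody M.
exists (2^-1 *: (M + M^T)); split; last split.
- by rewrite linearZ /= linearD /= trmxK addrC.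
- move=> x y /submxP [w1 ->] /submxP [w2 ->].
  rewrite /form_fwd /rho /rhos !rhoM !rhosM -/A -/B /pairing /bform.
  have t1 : w1 *m B *m (w2 *m A)^T = w1 *m (B *m A^T) *m w2^T.
    by rewrite trmx_mul !mulmxA.
  have t2 : ((w2 *m B) *m (w1 *m A)^T)^T = w1 *m (A *m B^T) *m w2^T.
    by rewrite !trmx_mul !trmxK !mulmxA.
  have t3 : w1 *m A *m (M + M^T) *m (w2 *m A)^T =
      w1 *m (A *m M *m A^T + A *m M^T *m A^T) *m w2^T.
    by rewrite [(w2 *m A)^T]trmx_mul !(mulmxDr, mulmxDl) !mulmxA.
  rewrite -(trE ((w2 *m B) *m (w1 *m A)^T)) t1 t2 -scalemxAr -scalemxAl.
  rewrite sE t3 -CM -CMT (mulmxDr w1) mulmxDl addE.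
  by rewrite mulrA mulfV ?mul1r ?subrr // pnatr_eq0.
- pose K : 'M[R]_(n, n + n) := row_mx 0 (kermx A^T).
  have KL : (K <= L)%MS.
    apply/row_subP => i; rewrite /K row_row_mx row0.
    apply: (proj1 (hL _)) => v [x [xL <-]].
    case/submxP: xL => D ->; rewrite /rho rhoM -/A /pairing trmx_mul mulmxA.
    have -> : row i (kermx A^T) *m A^T = 0 by apply/sub_kermxP; exact: row_sub.
    by rewrite mul0mx mxE.
  pose Pl : 'M[R]_(n + n, n) := col_mx 1%:M 0.
  have LP : L *m Pl = A by rewrite -{1}(hsubmxK L) mul_row_col mulmx1 mulmx0 addr0.
  have KP : (K <= L :&: kermx Pl)%MS.
    by rewrite sub_capmx KL sub_kermx /K mul_row_col mulmx0 mul0mx addr0 eqxx.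
  have := mxrank_mul_ker L Pl; rewrite LP => e.
  have := mxrankS KP; rewrite /K rank_row_0mx mxrank_ker mxrank_tr.
  have := rank_leq_col A; lia.
Qed.
End Fwd3.

Section Final.
Variables (R : realFieldType) (n : nat).
Local Notation V := 'rV[R]_n.
Local Notation VV := 'rV[R]_(n + n).

Lemma fwd_thm (L : 'M[R]_(n + n)) : forward_LD L ->
  exists Psi : 'M[R]_n, Psi^T = Psi /\
       nondeg_form (form_fwd Psi) /\ has_signature (form_fwd Psi) n n /\
       max_isotropic (form_fwd Psi) L.
Proof.
move=> hL; have [Psi [sym [iso rk]]] := fwd_main hL.
exists Psi; split=> //; split; first exact: fwd_nondeg.
split; first exact: fwd_sig.
split=> // L' iL' sub.
have [[[U [rU pU]] _] _] := fwd_sig Psi.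
have := pd_rank pU (N := L') (fun x hx => iL' x x hx hx); rewrite rU => h.
rewrite -(mxrank_leqif_sup sub).2; apply/eqP.
have := mxrankS sub; lia.
Qed.

Definition Sw : 'M[R]_(n + n) := block_mx 0 1%:M 1%:M 0.

Lemma SSw : Sw *m Sw = 1%:M.
Proof.
by rewrite /Sw mulmx_block !mulmx0 !mul0mx !mulmx1 !addr0 !add0r -scalar_mx_block.
Qed.

Lemma swapE (a b : V) : row_mx a b *m Sw = row_mx b a.
Proof. by rewrite /Sw mul_row_block !mulmx0 !mulmx1 add0r addr0. Qed.

Lemma bwd_fwd_form (P : 'M[R]_n) x y :
  form_bwd P x y = form_fwd P (x *m Sw) (y *m Sw).
Proof.
rewrite (row_eta x) (row_eta y) /form_bwd /form_fwd !swapE !rhoE !rhosE.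
by rewrite (pairing_sym (rho x)) (pairing_sym (rho y)) (addrC (pairing (rhos x) _)).
Qed.

Lemma bwd_fwd (L : 'M[R]_(n + n)) : backward_LD L -> forward_LD (L *m Sw).
Proof.
move=> hB eta; split.
- move=> h; rewrite (subS SSw) swapE; apply: (proj1 (hB eta)) => e [x [xL <-]].
  rewrite pairing_sym; apply: h; exists (x *m Sw); split.
    by rewrite (subS SSw) (SSx SSw).
  by rewrite (row_eta x) swapE rhoE rhosE.
- rewrite (subS SSw) swapE => h v [x [xL <-]].
  have h2 := proj2 (hB eta) h.
  rewrite pairing_sym; apply: h2; exists (x *m Sw); split.
    by rewrite -(subS SSw).
  by rewrite (row_eta x) swapE rhoE rhosE.
Qed.

Lemma bwd_thm (L : 'M[R]_(n + n)) : backward_LD L ->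
  exists Phi : 'M[R]_n, Phi^T = Phi /\
       nondeg_form (form_bwd Phi) /\ has_signature (form_bwd Phi) n n /\
       max_isotropic (form_bwd Phi) L.
Proof.
move=> hB; have [Psi [sym [nd [sg mi]]]] := fwd_thm (bwd_fwd hB).
have FG := bwd_fwd_form Psi.
exists Psi; split=> //; split; first exact: (tr_nondeg SSw FG).
split; first exact: (tr_sig SSw FG).
by have := tr_maxiso SSw FG mi; rewrite (SSx SSw).
Qed.

End Final.

Theorem proposition2p9 (R : realFieldType) (n : nat) :
  (forall L : 'M[R]_(n + n), forward_LD L ->
     exists Psi : 'M[R]_n, Psi^T = Psi /\
       nondeg_form (form_fwd Psi) /\ has_signature (form_fwd Psi) n n /\
       max_isotropic (form_fwd Psi) L) /\
  (forall L : 'M[R]_(n + n), backward_LD L ->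
     exists Phi : 'M[R]_n, Phi^T = Phi /\
       nondeg_form (form_bwd Phi) /\ has_signature (form_bwd Phi) n n /\
       max_isotropic (form_bwd Phi) L).
Proof. by split; [exact: fwd_thm | exact: bwd_thm]. Qed.
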